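(* The map $\mathcal{A}\ni A\mapsto\mathcal{P}_A\in\mathrm{Fix}(\Pi)$ is injective.
   Context: mm-spaces are triples $(X,d_X,\mu_X)$ with $(X,d_X)$ complete separable metric and $\mu_X$ a Borel probability measure, with $X=\operatorname{supp}\mu_X$. $\mathcal{X}$ is the set of their isomorphism classes under measure-preserving isometries of supports. A pyramid is a nonempty subset of $\mathcal{X}$ that is closed for the box distance, downward closed under the Lipschitz order ($Y\prec X$ iff there is a 1-Lipschitz $f\colon X\to Y$ with $f_*\mu_X=\mu_Y$), and such that any two elements are dominated by a common element. $\Pi$ is the set of pyramids. $\mathbb{R}_+$ acts on $\Pi$ by $t\mathcal{P}=\{(X,t\,d_X,\mu_X):X\in\mathcal{P}\}$, and $\mathrm{Fix}(\Pi)$ is its fixed-point set. $\mathcal{A}$ is the set of monotone non-increasing sequences $A=\{a_i\}_{i\ge1}$ of nonnegative reals with $\sum a_i\le1$. $\mathcal{P}_A=\{X\in\mathcal{X}:\exists\{x_i\}_{i\ge1}\subset X\text{ with }\sum_i a_i\delta_{x_i}\le\mu_X\}$, which is a pyramid in $\mathrm{Fix}(\Pi)$. *)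

(* Defs.v *)
From HB Require Import structures.
From mathcomp Require Import all_boot all_order all_algebra.
From mathcomp Require Import all_classical all_reals all_analysis.
Set Implicit Arguments. Unset Strict Implicit. Unset Printing Implicit Defensive.
Import Order.TTheory GRing.Theory Num.Theory.
Local Open Scope classical_set_scope.
Local Open Scope ring_scope.
Local Open Scope ereal_scope.
Local Open Scope ring_scope.

Section MetricDefs.
Variables (R : realType) (T : Type) (d : T -> T -> R).

Definition mball (x : T) (e : R) : set T := [set y | d x y < e].

Definition is_metric : Prop :=
  [/\ (forall x, d x x = 0),
      (forall x y, d x y = 0 -> x = y),
      (forall x y, d x y = d y x) &
      (forall x y z, d x z <= d x y + d y z)].

Definition metric_open (U : set T) : Prop :=
  forall x, U x -> exists2 e : R, 0 < e & mball x e `<=` U.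

Definition borel_set (B : set T) : Prop :=
  smallest (sigma_algebra setT) metric_open B.

Definition metric_complete : Prop :=
  forall u : nat -> T,
    (forall e : R, 0 < e -> exists N, forall n m, (N <= n)%N -> (N <= m)%N ->
       d (u n) (u m) < e) ->
    exists l, forall e : R, 0 < e -> exists N, forall n, (N <= n)%N -> d (u n) l < e.

Definition metric_separable : Prop :=
  exists s : nat -> T, forall x (e : R), 0 < e -> exists n, d x (s n) < e.

Definition borel_probability (mu : set T -> \bar R) : Prop :=
  [/\ mu set0 = 0%E,
      (forall B, borel_set B -> (0 <= mu B)%E),
      (forall F : nat -> set T, (forall n, borel_set (F n)) -> trivIset setT F ->
          mu (\bigcup_n F n) = (\sum_(0 <= i <oo) mu (F i))%E) &
      mu setT = 1%E].

Definition full_support (mu : set T -> \bar R) : Prop :=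
  forall x (e : R), 0 < e -> (0 < mu (mball x e))%E.

End MetricDefs.

Record mmSpace (R : realType) := MMSpace {
  mm_carrier : Type;
  mm_dist : mm_carrier -> mm_carrier -> R;
  mm_meas : set mm_carrier -> \bar R;
  mm_metric : is_metric mm_dist;
  mm_complete : metric_complete mm_dist;
  mm_separable : metric_separable mm_dist;
  mm_prob : borel_probability mm_dist mm_meas;
  mm_supp : full_support mm_dist mm_meas
}.

(* ---------- the class \mathcal{A} (indexed from 0 instead of 1) ---------- *)
Definition in_calA (R : realType) (a : nat -> R) : Prop :=
  [/\ (forall i, 0 <= a i),
      (forall i, a i.+1 <= a i) &
      (\sum_(0 <= i <oo) (a i)%:E <= 1)%E].

(* ---------- the pyramid P_A, as a predicate on mm-spaces ----------
   X \in P_A  iff  there are points x_i with  sum_i a_i delta_{x_i} <= mu_X,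
   i.e. for every Borel set B, sum_{i : x_i \in B} a_i <= mu_X(B). *)
Definition P_A (R : realType) (a : nat -> R) (X : mmSpace R) : Prop :=
  exists x : nat -> mm_carrier X,
    forall B : set (mm_carrier X), borel_set (@mm_dist R X) B ->
      (\sum_(0 <= i <oo | x i \in B) (a i)%:E <= @mm_meas R X B)%E.

(* Main.v *)
Require Import Defs.
From mathcomp Require Import all_boot all_order all_algebra.
From mathcomp Require Import all_classical all_reals all_analysis.
From mathcomp Require Import lra.
Set Implicit Arguments. Unset Strict Implicit. Unset Printing Implicit Defensive.
Import Order.TTheory GRing.Theory Num.Theory.
Local Open Scope classical_set_scope.
Local Open Scope ereal_scope.
Local Open Scope ring_scope.

Section Meas.
Variables (R : realType) (w : nat -> R) (w0 : forall i, 0 <= w i).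

Definition Mw : {measure set nat -> \bar R} :=
  mseries (fun i => mscale (NngNum (w0 i)) (@dirac _ nat i R)) 0.

Lemma MwE A : Mw A = (\sum_(0 <= i <oo) (w i)%:E * (i \in A)%:R%:E)%E.
Proof. rewrite /Mw /mseries /=; apply: eq_eseriesr => i _; by rewrite -[LHS]/((w i)%:E * \d_i A)%E diracE. Qed.

Lemma Mw_ge A n : A n -> ((w n)%:E <= Mw A)%E.
Proof.
move=> An; rewrite MwE.
apply: le_trans (nneseries_lim_ge n.+1 _); last first.
  by move=> i _ _; rewrite mule_ge0 // lee_fin.
rewrite big_nat_recr //= (mem_set An) mule1 -[X in (X <= _)%E]add0e leeD2r //.
by rewrite sume_ge0 // => i _; rewrite mule_ge0 // lee_fin.
Qed.

Lemma Mw_fin N A : A `<=` [set i | (i < N)%N] ->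
  Mw A = (\sum_(0 <= i < N) (w i)%:E * (i \in A)%:R%:E)%E.
Proof.
move=> AN; rewrite MwE (nneseries_split 0 N); last first.
  by move=> i _; rewrite mule_ge0 // lee_fin.
rewrite add0n eseries0 ?adde0 // => i Ni _.
rewrite memNset ?mule0 // => /AN /=; by rewrite ltnNge Ni.
Qed.

End Meas.

Section Space.
Variables (R : realType) (w : nat -> R) (w0 : forall i, 0 <= w i)
  (wsum : (\sum_(0 <= i <oo) (w i)%:E)%E = 1%E).

Definition S := {i : nat | 0 < w i}.
Definition dS (x y : S) : R := (val x != val y)%:R.
Definition muS (B : set S) : \bar R := Mw w0 (val @` B).

Lemma S_inhabited : exists i, 0 < w i.
Proof.
apply: contrapT => /forallNP H.
have : (\sum_(0 <= i <oo) (w i)%:E)%E = 0%E.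
  apply: eseries0 => i _ _; congr (_%:E); apply/eqP.
  by rewrite eq_le w0 andbT leNgt; apply/negP/H.
by rewrite wsum => /eqP; rewrite onee_eq0.
Qed.

Lemma dS_small (x y : S) (e : R) : e <= 1 -> dS x y < e -> x = y.
Proof.
rewrite /dS => e1; case: eqVneq => [/val_inj //|_] /= h.
by move: (lt_le_trans h e1); rewrite ltxx.
Qed.

Lemma dS_metric : is_metric dS.
Proof.
split.
- by move=> x; rewrite /dS eqxx.
- by move=> x y; rewrite /dS; case: eqVneq => [/val_inj //|_] /eqP; rewrite oner_eq0.
- by move=> x y; rewrite /dS eq_sym.
- move=> x y z; rewrite /dS; case: (eqVneq (val x) (val z)) => [_|xz] /=.
    by rewrite addr_ge0.
  case: (eqVneq (val x) (val y)) => [xy|_] /=.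
    by rewrite add0r -xy xz.
  by rewrite lerDl.
Qed.

Lemma dS_complete : metric_complete dS.
Proof.
move=> u /(_ 1 ltr01) [N HN]; exists (u N) => e e0; exists N => n Nn.
by rewrite (dS_small (le_refl 1) (HN n N Nn (leqnn N))) /dS eqxx.
Qed.

Lemma dS_separable : metric_separable dS.
Proof.
have [i wi] := S_inhabited.
pose s0 : S := exist _ i wi.
exists (fun n => insubd s0 n) => x e e0; exists (val x).
by rewrite valKd /dS eqxx.
Qed.

Lemma all_open (B : set S) : metric_open dS B.
Proof.
move=> x Bx; exists 1 => // y /= /(dS_small (le_refl 1)) <-.
exact: Bx.
Qed.

Lemma all_borel (B : set S) : borel_set dS B.
Proof. by move=> G [_ HG]; apply: HG; exact: all_open. Qed.

Lemma muS_prob : borel_probability dS muS.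
Proof.
split.
- by rewrite /muS image_set0 measure0.
- by move=> B _; exact: measure_ge0.
- move=> F _ tF; rewrite /muS image_bigcup.
  rewrite (measure_bigcup _ setT) //.
  + by apply: eq_eseriesl => n; rewrite in_setT.
  + move=> i j _ _ [n [[x Fix <-] [y Fjy]]] /val_inj xy.
    by apply: (tF i j) => //; exists x; split => //; rewrite -xy.
- rewrite /muS MwE -wsum; apply: eq_eseriesr => i _.
  have [wi|] := ltrP 0 (w i).
    rewrite mem_set ?mule1 //; by exists (exist _ i wi).
  move=> wle; have wi0 : w i = 0 by apply/eqP; rewrite eq_le wle w0.
  by rewrite wi0 mul0e.
Qed.

Lemma muS_supp : full_support dS muS.
Proof.
move=> x e e0; apply: (lt_le_trans _ (Mw_ge w0 (n := val x) _)).
  by rewrite lte_fin; exact: (valP x).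
by exists x => //; rewrite /mball /= /dS eqxx.
Qed.

Definition mmS : mmSpace R :=
  MMSpace dS_metric dS_complete dS_separable muS_prob muS_supp.

End Space.

Lemma noninc (R : realType) (f : nat -> R) : (forall i, f i.+1 <= f i) ->
  forall i j, (i <= j)%N -> f j <= f i.
Proof.
move=> h i j /subnK <-; elim: (j - i)%N => //= n ih.
by rewrite addSn; exact: le_trans (h _) ih.
Qed.

Lemma sep (R : realType) (a b : nat -> R) : in_calA a -> in_calA b ->
  forall k, (forall i, (i < k)%N -> a i = b i) -> b k < a k ->
  exists X : mmSpace R, P_A b X /\ ~ P_A a X.
Proof.
move=> [a0 amono asum] [b0 bmono bsum] k hpre hk.
set Sb := (\sum_(0 <= i <oo) (b i)%:E)%E in bsum.
have Sb0 : (0 <= Sb)%E by apply: nneseries_ge0 => i _ _; rewrite lee_fin.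
have Sbfin : Sb \is a fin_num.
  by rewrite ge0_fin_numE // (le_lt_trans bsum) // ltry.
set sb := fine Sb.
have Sbsb : Sb = sb%:E by rewrite fineK.
have sb1 : sb <= 1 by rewrite -lee_fin -Sbsb.
set T := 1 - sb.
have T0 : 0 <= T by rewrite subr_ge0.
set g := a k - b k.
have g0 : 0 < g by rewrite subr_gt0.
set M := (Num.truncn (T / g)).+1.
have M0 : (0 < M%:R :> R) by rewrite ltr0n.
have TMg : T / M%:R < g.
  rewrite ltr_pdivrMr // mulrC -ltr_pdivrMr //; exact: truncnS_gt.
pose c i := if (k <= i < k + M)%N then T / M%:R else 0.
have c0 i : 0 <= c i by rewrite /c; case: ifP => // _; rewrite divr_ge0 // ltW.
have cle i : c i <= T / M%:R by rewrite /c; case: ifP => // _; rewrite divr_ge0 // ltW.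
pose w i := b i + c i.
have w0 i : 0 <= w i by rewrite addr_ge0.
have wk i : (i < k)%N -> w i = a i.
  by move=> ik; rewrite /w /c leqNgt ik /= addr0 hpre.
have wlt n : (k <= n)%N -> w n < a k.
  move=> kn; have := noninc bmono kn; have := cle n; rewrite /w /g in TMg *; lra.
have csum : (\sum_(0 <= i <oo) (c i)%:E)%E = T%:E.
  rewrite (nneseries_split 0 (k + M)); last by move=> i _; rewrite lee_fin.
  rewrite add0n eseries0 ?adde0; last first.
    by move=> i; rewrite ?add0n => hi _; rewrite /c [(i < _)%N]ltnNge hi andbF.
  rewrite sumEFin; congr (_%:E).
  rewrite (big_cat_nat (leq0n k)) ?leq_addr //= big_nat_cond big1 ?add0r; last first.
    by move=> i /andP[/andP[_ ik] _]; rewrite /c leqNgt ik.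
  rewrite (eq_big_nat _ _ (F2 := fun=> T / M%:R)); last first.
    by move=> i /andP[ki iM]; rewrite /c ki iM.
  by rewrite sumr_const_nat addKn -[_ *+ M]mulr_natr divfK // gt_eqF.
have wsum : (\sum_(0 <= i <oo) (w i)%:E)%E = 1%E.
  rewrite /w; under eq_eseriesr do rewrite EFinD.
  rewrite nneseriesD; [|by move=> i _ _; rewrite lee_fin|by move=> i _ _; rewrite lee_fin].
  by rewrite -/Sb csum Sbsb -EFinD /T addrC subrK.
exists (mmS w0 wsum); split.
- have [i0 wi0] := S_inhabited w0 wsum.
  pose s0 : S w := exist _ i0 wi0.
  exists (fun n => insubd s0 n) => B _ /=.
  rewrite /muS MwE eseries_mkcond; apply: lee_nneseries.
    by move=> i _ _; case: ifP => // _; rewrite lee_fin.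
  move=> i _; case: ifP => xB; last by rewrite mule_ge0 // lee_fin.
  have [wi|wle] := ltrP 0 (w i).
    rewrite mem_set ?mule1; last first.
      by exists (insubd s0 i); [exact: set_mem|rewrite insubdK].
    by rewrite lee_fin /w lerDl.
  apply: (@le_trans _ _ 0%E); first by rewrite lee_fin (le_trans _ wle) // lerDl.
  by rewrite mule_ge0 // lee_fin.
- move=> [x Hx].
  have H1 j : (j <= k)%N -> (val (x j) < k)%N.
    move=> jk; rewrite ltnNge; apply/negP => kx.
    have := Hx [set x j] (all_borel _).
    rewrite /= /muS image_set1 (@Mw_fin _ _ _ (val (x j)).+1); last first.
      by move=> n /= ->.
    rewrite big_nat_recr //= mem_set // mule1 big_nat_cond big1 ?add0e; last first.
      move=> i /andP[/andP[_ ij] _]; rewrite memNset ?mule0 // => /= ije.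
      by rewrite ije ltnn in ij.
    move=> hle.
    have : ((a j)%:E <= (w (val (x j)))%:E)%E.
      apply: le_trans hle.
      have hl := nneseries_lim_ge (u_ := fun i => (a i)%:E) (P := fun i => x i \in [set x j]) (m := 0) j.+1.
      apply: le_trans (hl _); first last.
        by move=> i _ _; rewrite lee_fin.
      rewrite big_mkcond big_nat_recr //= mem_set // -[X in (X <= _)%E]add0e leeD2r //.
      by rewrite sume_ge0 // => i _; case: ifP => // _; rewrite lee_fin.
    rewrite lee_fin => ajw.
    have := wlt _ kx; have := noninc amono jk; lra.
  have := Hx [set s : S w | (val s < k)%N] (all_borel _).
  rewrite /= /muS (@Mw_fin _ _ _ k); last by move=> n /= [s + <-].
  move=> hle.
  have : (\sum_(0 <= i < k.+1) (a i)%:E <= \sum_(0 <= i < k) (a i)%:E)%E.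
    have hl := nneseries_lim_ge (u_ := fun i => (a i)%:E) (P := fun i => x i \in [set s : S w | (val s < k)%N]) (m := 0) k.+1.
    have h1 : (\sum_(0 <= i < k.+1) (a i)%:E <= \sum_(0 <= i < k.+1 | x i \in [set s : S w | (val s < k)%N]) (a i)%:E)%E.
      rewrite [X in (_ <= X)%E](_ : _ = \sum_(0 <= i < k.+1) (a i)%:E)%E //.
      rewrite big_mkcond; apply: eq_big_nat => i /andP[_ ik].
      by rewrite mem_set //; apply: H1; rewrite -ltnS.
    have h3 : (\sum_(0 <= i < k) (w i)%:E * ((i \in [set \val x0 | x0 in [set s : S w | (\val s < k)%N]])%:R)%:E <= \sum_(0 <= i < k) (a i)%:E)%E.
      rewrite big_nat_cond [X in (_ <= X)%E]big_nat_cond.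
      apply: lee_sum => i /andP[/andP[_ ik] _]; rewrite -(wk _ ik).
      by case: (i \in _); rewrite ?mule1 ?mule0 ?lee_fin.
    apply: le_trans h1 (le_trans (le_trans (hl _) hle) h3).
    by move=> i _ _; rewrite lee_fin.
  rewrite !sumEFin lee_fin big_nat_recr //=.
  have := le_lt_trans (b0 k) hk; lra.
Qed.

Theorem lemma4p2 (R : realType) (a b : nat -> R) :
  in_calA a -> in_calA b ->
  (forall X : mmSpace R, P_A a X <-> P_A b X) ->
  a = b.
Proof.
move=> ha hb hP; apply/funext => i; apply: contrapT => abi.
have ex : exists n, a n != b n by exists i; apply/eqP.
case: (ex_minnP ex) => k abk kmin.
have pre j : (j < k)%N -> a j = b j.
  move=> jk; apply/eqP; apply: contraTT jk => /kmin; by rewrite -leqNgt.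
case/orP: (lt_total abk) => [lt|lt].
- have [X [HX nX]] := sep hb ha (fun j jk => esym (pre j jk)) lt.
  by apply: nX; apply/hP.
- have [X [HX nX]] := sep ha hb pre lt.
  by apply: nX; apply/hP.
Qed.
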